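(* Let $\mathscr H$ and $\mathscr F$ be RKHSs on sets $\mathcal X$ and $\mathcal Y$ with feature maps $\phi$ and $\psi$, let $\Phi=[\phi(x_1),\dots,\phi(x_m)]$ and $\Psi=[\psi(y_1),\dots,\psi(y_n)]$ each consist of linearly independent elements, let $B\in\mathbb R^{n\times m}$, and let $S=\Psi B\Phi^\top\colon\mathscr H\to\mathscr F$. Let $G_\Phi=\Phi^\top\Phi$ and $G_\Psi=\Psi^\top\Psi$. Let $\sigma_1,\dots,\sigma_r$ be the strictly positive eigenvalues and $\begin{bsmallmatrix}\mathbf w_i\\ \mathbf z_i\end{bsmallmatrix}\in\mathbb R^{n+m}$ ($\mathbf w_i\in\mathbb R^n$, $\mathbf z_i\in\mathbb R^m$) corresponding eigenvectors of the matrix $$\begin{bmatrix}0 & BG_\Phi\\ B^\top G_\Psi & 0\end{bmatrix}\in\mathbb R^{(n+m)\times(n+m)}.$$ Then the singular value decomposition of $S$ is $$S=\sum_{i=1}^r\sigma_i\Big[\big(\|\Psi\mathbf w_i\|_{\mathscr F}^{-1}\Psi\mathbf w_i\big)\otimes\big(\|\Phi\mathbf z_i\|_{\mathscr H}^{-1}\Phi\mathbf z_i\big)\Big].$$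
   Context: An RKHS $\mathscr H$ on $\mathcal X$ with kernel $k$ has feature map $\phi(x)=k(x,\cdot)$ (similarly $\mathscr F$ with kernel $l$, feature map $\psi$). Feature matrices are row vectors: $\Phi\mathbf a=\sum_j a_j\phi(x_j)$ for $\mathbf a\in\mathbb R^m$; $\Phi^\top v=(\langle\phi(x_j),v\rangle_{\mathscr H})_j$ for $v\in\mathscr H$; $G_\Phi=(k(x_i,x_j))_{ij}$ and $G_\Psi=(l(y_i,y_j))_{ij}$ are the Gram matrices. Thus $Sv=\sum_i\psi(y_i)\sum_jb_{ij}\langle\phi(x_j),v\rangle$. The tensor product operator is $(y\otimes x)h=\langle x,h\rangle y$; a singular value decomposition $\sum_i\sigma_i(u_i\otimes v_i)$ has orthonormal systems $\{u_i\}\subseteq\mathscr F$, $\{v_i\}\subseteq\mathscr H$ and $\sigma_i>0$. *)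

(* Defs.v *)
From HB Require Import structures.
From mathcomp Require Import all_boot all_order all_algebra.
From mathcomp Require Import reals.
Set Implicit Arguments. Unset Strict Implicit. Unset Printing Implicit Defensive.
Import Order.TTheory GRing.Theory Num.Theory.
Local Open Scope ring_scope.

Section Defs.
Variable R : realType.

Definition inner_product (V : lmodType R) (ip : V -> V -> R) : Prop :=
  [/\ (forall u v, ip u v = ip v u),
      (forall (a : R) u v w, ip (a *: u + v) w = a * ip u w + ip v w)
    & (forall v, v != 0 -> 0 < ip v v)].

Definition ipnorm (V : lmodType R) (ip : V -> V -> R) (v : V) : R :=
  Num.sqrt (ip v v).

Definition ip_complete (V : lmodType R) (ip : V -> V -> R) : Prop :=
  forall u : nat -> V,
    (forall eps : R, 0 < eps -> exists N : nat, forall p q : nat,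
        (N <= p)%N -> (N <= q)%N -> ipnorm ip (u p - u q) < eps) ->
    exists l : V, forall eps : R, 0 < eps -> exists N : nat, forall p : nat,
        (N <= p)%N -> ipnorm ip (u p - l) < eps.

(* (V, ip) is a reproducing kernel Hilbert space on X: a Hilbert space,
   identified (through the injective map ev) with a space of functions
   X -> R, with feature map phi satisfying the reproducing property
   f(x) = <phi x, f>. *)
Definition is_rkhs (X : Type) (V : lmodType R) (ip : V -> V -> R)
    (ev : V -> X -> R) (phi : X -> V) : Prop :=
  [/\ inner_product ip, ip_complete ip, injective ev
    & (forall (f : V) (x : X), ev f x = ip (phi x) f)].

Definition kernel_of (X : Type) (V : lmodType R) (ip : V -> V -> R)
    (phi : X -> V) (x x' : X) : R := ip (phi x) (phi x').

Definition lin_indep (V : lmodType R) (m : nat) (e : 'I_m -> V) : Prop :=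
  forall a : 'I_m -> R, \sum_(j < m) a j *: e j = 0 -> forall j, a j = 0.

Definition featmat (V : lmodType R) (m : nat) (e : 'I_m -> V)
    (a : 'cV[R]_m) : V := \sum_(j < m) a j 0 *: e j.

Definition featmatT (V : lmodType R) (ip : V -> V -> R) (m : nat)
    (e : 'I_m -> V) (v : V) : 'cV[R]_m := \col_(j < m) ip (e j) v.

Definition gram (V : lmodType R) (ip : V -> V -> R) (m : nat)
    (e : 'I_m -> V) : 'M[R]_m := \matrix_(i < m, j < m) ip (e i) (e j).

Definition tensor_op (U V : lmodType R) (ipV : V -> V -> R)
    (y : U) (x : V) (h : V) : U := ipV x h *: y.

Definition orthonormal_fam (V : lmodType R) (ip : V -> V -> R) (r : nat)
    (e : 'I_r -> V) : Prop :=
  forall i j : 'I_r, ip (e i) (e j) = (i == j)%:R.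

End Defs.

(* Main.v *)
Require Import Defs.
From HB Require Import structures.
From mathcomp Require Import all_boot all_order all_algebra.
From mathcomp Require Import reals.
From mathcomp Require Import complex.
From mathcomp Require Import ring lra.
Import Order.TTheory GRing.Theory Num.Theory.
Local Open Scope ring_scope.
Section Cplx.
Local Open Scope complex_scope.
Variable R : rcfType.

Lemma ReD (x y : R[i]) : complex.Re (x + y) = complex.Re x + complex.Re y.
Proof. by case: x => a b; case: y => c d. Qed.
Lemma ImD (x y : R[i]) : complex.Im (x + y) = complex.Im x + complex.Im y.
Proof. by case: x => a b; case: y => c d. Qed.
Lemma Re_sum (I : Type) (r : seq I) (F : I -> R[i]) :
  complex.Re (\sum_(i <- r) F i) = \sum_(i <- r) complex.Re (F i).
Proof. exact: (big_morph _ ReD). Qed.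
Lemma Im_sum (I : Type) (r : seq I) (F : I -> R[i]) :
  complex.Im (\sum_(i <- r) F i) = \sum_(i <- r) complex.Im (F i).
Proof. exact: (big_morph _ ImD). Qed.
Lemma ReMR (z : R[i]) (x : R) : complex.Re (z * x%:C) = complex.Re z * x.
Proof. by case: z => p q; simpc. Qed.
Lemma ImMR (z : R[i]) (x : R) : complex.Im (z * x%:C) = complex.Im z * x.
Proof. by case: z => p q; simpc. Qed.
Lemma ReM (z y : R[i]) : complex.Re (z * y) =
   complex.Re z * complex.Re y - complex.Im z * complex.Im y.
Proof. by case: z => p q; case: y => c d; simpc. Qed.
Lemma ImM (z y : R[i]) : complex.Im (z * y) =
   complex.Re z * complex.Im y + complex.Im z * complex.Re y.
Proof. by case: z => p q; case: y => c d; simpc. Qed.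

Lemma cplx_eig n (A : 'M[R]_n) : (forall k, A ^+ k != 0) ->
  exists (al be : R) (a b : 'rV[R]_n), (al != 0 \/ be != 0) /\ (a != 0 \/ b != 0)
   /\ a *m A = al *: a - be *: b /\ b *m A = be *: a + al *: b.
Proof.
case: n A => [|n'] A nil.
  by have := nil 1%N; rewrite expr1 => /negP; case; apply/eqP/matrixP => -[].
pose f := real_complex R.
set Ac := map_mx f A.
have [rs Hp] := closed_field_poly_normal (char_poly Ac).
rewrite (monicP (char_poly_monic _)) scale1r in Hp.
have [/hasP [l lrs l0] | nhas] := boolP (has (fun z => z != 0) rs); last first.
  exfalso.
  have Hrs : \prod_(z <- rs) ('X - z%:P) = 'X^(size rs) :> {poly R[i]}.
    elim: rs nhas {Hp} => [|z rs IH] /=; first by rewrite big_nil expr0.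
    rewrite negb_or negbK big_cons => /andP [/eqP -> /IH ->].
    by rewrite subr0 exprS.
  have Hc : char_poly A = 'X^(size rs).
    apply: (map_poly_inj f); rewrite map_polyXn map_char_poly -/Ac Hp Hrs //.
  have := Cayley_Hamilton A; rewrite Hc rmorphXn /= horner_mx_X => /eqP.
  by apply/negP; apply: nil.
have : eigenvalue Ac l by rewrite eigenvalue_root_char Hp root_prod_XsubC.
case/eigenvalueP => v Hv v0.
exists (complex.Re l), (complex.Im l), (map_mx (@complex.Re R) v), (map_mx (@complex.Im R) v).
split.
  case: l l0 {lrs Hv} => p q; rewrite eq_complex negb_and /=.
  by case/orP; [left|right].
split.
  have [Ha|] := eqVneq (map_mx (@complex.Re R) v) 0; last by left.
  have [Hb|] := eqVneq (map_mx (@complex.Im R) v) 0; last by right.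
  exfalso; move/negP: v0; apply.
  apply/eqP/matrixP => i j; move/matrixP: Ha => /(_ i j); move/matrixP: Hb => /(_ i j).
  rewrite !mxE; case: (v i j) => p q /= -> ->; by [].
split; apply/matrixP => i j; move/matrixP: Hv => /(_ i j); rewrite !mxE => Hv.
  move: (congr1 (@complex.Re R) Hv); rewrite Re_sum ReM => <-.
  by apply: eq_bigr => k _; rewrite !mxE ReMR.
move: (congr1 (@complex.Im R) Hv); rewrite Im_sum ImM addrC => <-.
by apply: eq_bigr => k _; rewrite !mxE ImMR.
Qed.
End Cplx.

Definition bf (R : pzRingType) n (G : 'M[R]_n) (x y : 'cV[R]_n) : R := (x^T *m G *m y) 0 0.

Arguments bf {R n}.
Section RealEig.
Variable R : rcfType.

Lemma bf_symT n (G : 'M[R]_n) x y : G^T = G -> bf G x y = bf G y x.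
Proof.
move=> HG; rewrite /bf.
have E (M : 'M[R]_1) : M 0 0 = M^T 0 0 by rewrite mxE.
by rewrite E !trmx_mul trmxK HG mulmxA.
Qed.

Lemma bf_linr n (G : 'M[R]_n) x (a b : R) u v :
  bf G x (a *: u + b *: v) = a * bf G x u + b * bf G x v.
Proof. by rewrite /bf mulmxDr -!scalemxAr !mxE. Qed.

Lemma bf_linB n (G : 'M[R]_n) x (a b : R) u v :
  bf G x (a *: u - b *: v) = a * bf G x u - b * bf G x v.
Proof. by rewrite /bf mulmxBr -!scalemxAr !mxE. Qed.

Lemma mx_eq0 m n (A : 'M[R]_(m, n)) : (forall x : 'cV_n, A *m x = 0) -> A = 0.
Proof.
move=> H; apply/matrixP => i j.
have := H (delta_mx j 0); rewrite -colE => /matrixP /(_ i 0).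
by rewrite !mxE.
Qed.

Lemma trmx_exp n (N : 'M[R]_n) k : (N ^+ k)^T = (N^T) ^+ k.
Proof.
elim: k => [|k IH]; first by rewrite !expr0 trmx1.
by rewrite exprS exprSr -!mulmxE trmx_mul IH.
Qed.

Lemma pos_eig n (N G : 'M[R]_n) :
  G^T = G -> (forall x : 'cV_n, x != 0 -> 0 < bf G x x) ->
  (G *m N)^T = G *m N -> (forall x, 0 <= bf (G *m N) x x) -> N != 0 ->
  exists s (w : 'cV_n), 0 < s /\ w != 0 /\ N *m w = s *: w.
Proof.
move=> HG PD HP PSD N0.
have ge0 : forall x, 0 <= bf G x x.
  move=> x; have [->|x0] := eqVneq x 0; last exact/ltW/PD.
  by rewrite /bf mulmx0 mxE.
have key : forall y : 'cV_n, N *m (N *m y) = 0 -> N *m y = 0.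
  move=> y Hy; apply/eqP; apply: contraT => Hn.
  have := PD _ Hn; rewrite /bf trmx_mul -(mulmxA y^T).
  have -> : (N^T *m G) = G *m N by rewrite -HP trmx_mul HG.
  by rewrite -!mulmxA Hy !mulmx0 mxE ltxx.
have nil : forall k, N ^+ k != 0.
  have step : forall k, N ^+ k.+2 = 0 -> N ^+ k.+1 = 0.
    move=> k Hk; apply: mx_eq0 => x.
    rewrite exprS -mulmxE -mulmxA; apply: key.
    have E2 : N ^+ k.+2 = N *m (N *m N ^+ k) by rewrite !exprS -!mulmxE.
    by rewrite !mulmxA -(mulmxA N N) -E2 Hk mul0mx.
  have one : forall k, N ^+ k.+1 = 0 -> N = 0.
    elim=> [|k IH]; first by rewrite expr1.
    by move/step/IH.
  case=> [|k]; last by apply/eqP => /one /eqP; apply/negP.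
  rewrite expr0; apply/eqP => H1; move/negP: N0; apply; apply/eqP.
  by rewrite -[N]mulr1 H1 mulr0.
have nilT : forall k, N^T ^+ k != 0.
  move=> k; rewrite -trmx_exp; apply/eqP => /(congr1 trmx); rewrite trmxK trmx0.
  by apply/eqP.
have [al [be [a [b [Hl [Hab [Ha Hb]]]]]]] := @cplx_eig R n N^T nilT.
have Nac : N *m a^T = al *: a^T - be *: b^T.
  by rewrite -[N]trmxK -trmx_mul Ha linearB !linearZ.
have Nbc : N *m b^T = be *: a^T + al *: b^T.
  by rewrite -[N]trmxK -trmx_mul Hb linearD !linearZ.
have bfP x y : bf (G *m N) x y = bf G x (N *m y) by rewrite /bf !mulmxA.
have symG x y := @bf_symT n G x y HG.
have Pab := @bf_symT n _ a^T b^T HP.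
rewrite !bfP Nac Nbc bf_linr bf_linB (symG a^T b^T) in Pab.
have Paa := PSD a^T; have Pbb := PSD b^T.
rewrite !bfP Nac Nbc bf_linr bf_linB (symG a^T b^T) in Paa Pbb.
have qa := ge0 a^T; have qb := ge0 b^T.
have qpos : 0 < bf G a^T a^T + bf G b^T b^T.
  case: Hab => H0.
    have := PD a^T; rewrite trmx_eq0 => /(_ H0); lra.
  have := PD b^T; rewrite trmx_eq0 => /(_ H0); lra.
have be0 : be = 0.
  have : be * (bf G a^T a^T + bf G b^T b^T) = 0 by lra.
  by move/eqP; rewrite mulf_eq0 (gt_eqF qpos) orbF => /eqP.
have al0 : 0 < al.
  rewrite lt_def; apply/andP; split; first by case: Hl => //; rewrite be0 eqxx.
  have : 0 <= al * (bf G a^T a^T + bf G b^T b^T) by rewrite be0 in Paa Pbb; lra.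
  by rewrite pmulr_lge0.
rewrite be0 scale0r subr0 in Nac; rewrite be0 scale0r add0r in Nbc.
exists al; case: Hab => H0.
  by exists a^T; rewrite trmx_eq0.
by exists b^T; rewrite trmx_eq0.
Qed.
End RealEig.

Lemma mxE00 (R : pzRingType) (M : 'M[R]_1) : M 0 0 = M^T 0 0.
Proof. by rewrite mxE. Qed.

Lemma bf_scaler (R : comPzRingType) n (G : 'M[R]_n) x (a : R) y :
  bf G x (a *: y) = a * bf G x y.
Proof. by rewrite /bf -scalemxAr mxE. Qed.

Lemma bf_sumr (R : comPzRingType) n r (G : 'M[R]_n) x (c : 'I_r -> R) (y : 'I_r -> 'cV_n) :
  bf G x (\sum_i c i *: y i) = \sum_i c i * bf G x (y i).
Proof.
rewrite /bf mulmx_sumr summxE; apply: eq_bigr => i _.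
by rewrite -scalemxAr mxE.
Qed.

Lemma mul_1x1 (R : comPzRingType) n (w : 'cV[R]_n) (M : 'M[R]_1) : w *m M = M 0 0 *: w.
Proof.
apply/matrixP => i j; rewrite !mxE big_ord1 mulrC (ord1 j).
by [].
Qed.

Lemma sum_outer (R : comPzRingType) a b r (c : 'I_r -> R) (p : 'I_r -> 'cV[R]_a)
   (s : 'I_r -> 'cV[R]_b) (G : 'M[R]_b) (t : 'cV[R]_b) :
  (\sum_i c i *: (p i *m (s i)^T)) *m G *m t = \sum_i (c i * bf G (s i) t) *: p i.
Proof.
rewrite !mulmx_suml; apply: eq_bigr => i _.
by rewrite -!scalemxAl -!mulmxA mul_1x1 scalerA !mulmxA.
Qed.

Section Hilb.
Variable R : realType.
Variable V : lmodType R.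
Variable ip : V -> V -> R.
Hypothesis ipH : inner_product ip.

Lemma ipC u v : ip u v = ip v u.
Proof. by case: ipH. Qed.
Lemma ipL a u v w : ip (a *: u + v) w = a * ip u w + ip v w.
Proof. by case: ipH. Qed.
Lemma ip0l w : ip 0 w = 0.
Proof.
have := ipL 1 0 0 w; rewrite scaler0 addr0 mul1r => /eqP.
by rewrite -subr_eq subrr eq_sym => /eqP.
Qed.
Lemma ipDl u v w : ip (u + v) w = ip u w + ip v w.
Proof. by have := ipL 1 u v w; rewrite scale1r mul1r. Qed.
Lemma ipZl a u w : ip (a *: u) w = a * ip u w.
Proof. by rewrite -[a *: u]addr0 ipL ip0l addr0. Qed.
Lemma ipZr a u w : ip w (a *: u) = a * ip w u.
Proof. by rewrite ipC ipZl ipC. Qed.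
Lemma ip_suml I (r : seq I) (F : I -> V) w :
  ip (\sum_(i <- r) F i) w = \sum_(i <- r) ip (F i) w.
Proof. exact: (big_morph (fun u => ip u w) (fun u v => ipDl u v w) (ip0l w)). Qed.

Variable m : nat.
Variable e : 'I_m -> V.

Lemma ip_featl a h : ip (featmat e a) h = (a^T *m featmatT ip e h) 0 0.
Proof.
rewrite /featmat ip_suml !mxE; apply: eq_bigr => j _.
by rewrite ipZl !mxE.
Qed.

Lemma featT_feat b : featmatT ip e (featmat e b) = gram ip e *m b.
Proof.
apply/matrixP => i k; rewrite (ord1 k) !mxE ipC ip_suml.
by apply: eq_bigr => j _; rewrite ipZl !mxE ipC mulrC.
Qed.

Lemma ip_ff a b : ip (featmat e a) (featmat e b) = bf (gram ip e) a b.
Proof. by rewrite ip_featl featT_feat /bf mulmxA. Qed.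

Lemma gram_sym : (gram ip e)^T = gram ip e.
Proof. by apply/matrixP => i j; rewrite !mxE ipC. Qed.

Lemma gram_pd : lin_indep e -> forall a, a != 0 -> 0 < bf (gram ip e) a a.
Proof.
move=> li a a0; rewrite -ip_ff.
case: ipH => _ _; apply.
apply: contra a0 => /eqP H0; apply/eqP/matrixP => j k.
by rewrite (ord1 k) mxE; apply: (li (fun j => a j 0)).
Qed.

Lemma featmat_lin r (c : 'I_r -> R) (w : 'I_r -> 'cV[R]_m) :
  featmat e (\sum_i c i *: w i) = \sum_i c i *: featmat e (w i).
Proof.
rewrite /featmat.
under eq_bigr => j _ do rewrite summxE scaler_suml.
rewrite exchange_big; apply: eq_bigr => i _.
by rewrite scaler_sumr; apply: eq_bigr => j _; rewrite mxE scalerA.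
Qed.

End Hilb.
Theorem theorem3p17 (R : realType) (X Y : Type)
  (H : lmodType R) (ipH : H -> H -> R) (evH : H -> X -> R) (phi : X -> H)
  (F : lmodType R) (ipF : F -> F -> R) (evF : F -> Y -> R) (psi : Y -> F)
  (rkhsH : is_rkhs ipH evH phi) (rkhsF : is_rkhs ipF evF psi)
  (m n : nat) (x : 'I_m -> X) (y : 'I_n -> Y)
  (indPhi : lin_indep (fun j => phi (x j)))
  (indPsi : lin_indep (fun i => psi (y i)))
  (B : 'M[R]_(n, m))
  (r : nat) (sigma : 'I_r -> R) (w : 'I_r -> 'cV[R]_n) (z : 'I_r -> 'cV[R]_m)
  (* sigma_i > 0 are eigenvalues with eigenvectors [w_i; z_i] *)
  (sigma_pos : forall i, 0 < sigma i)
  (eigvec_nz : forall i, col_mx (w i) (z i) != 0)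
  (eigvec : forall i,
     block_mx 0 (B *m gram ipH (fun j => phi (x j)))
              (B^T *m gram ipF (fun i => psi (y i))) 0 *m col_mx (w i) (z i)
     = sigma i *: col_mx (w i) (z i))
  (* the eigenvectors are pairwise orthogonal for diag(G_Psi, G_Phi) *)
  (eig_orth : forall i j, i != j ->
     ((w i)^T *m gram ipF (fun k => psi (y k)) *m w j
      + (z i)^T *m gram ipH (fun k => phi (x k)) *m z j) 0 0 = 0)
  (* they exhaust all eigenvectors for strictly positive eigenvalues *)
  (eig_all : forall (s : R) (v : 'cV[R]_(n + m)), 0 < s ->
     block_mx 0 (B *m gram ipH (fun j => phi (x j)))
              (B^T *m gram ipF (fun i => psi (y i))) 0 *m v = s *: v ->
     (v^T <= \matrix_(i < r, k < n + m) col_mx (w i) (z i) k 0)%MS) :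
  let Phi := featmat (fun j => phi (x j)) in
  let Psi := featmat (fun i => psi (y i)) in
  let S := fun h : H => Psi (B *m featmatT ipH (fun j => phi (x j)) h) in
  let u := fun i => (ipnorm ipF (Psi (w i)))^-1 *: Psi (w i) in
  let v := fun i => (ipnorm ipH (Phi (z i)))^-1 *: Phi (z i) in
  [/\ forall h : H, S h = \sum_(i < r) sigma i *: tensor_op ipH (u i) (v i) h,
      orthonormal_fam ipF u & orthonormal_fam ipH v].
Proof.
move=> Phi Psi S u v.
have [ipHp _ _ _] := rkhsH; have [ipFp _ _ _] := rkhsF.
set eH := (fun j => phi (x j)) in Phi S v indPhi eigvec eig_orth eig_all *.
set eF := (fun i => psi (y i)) in Psi S u indPsi eigvec eig_orth eig_all *.
set GH := gram ipH eH in eigvec eig_orth eig_all *.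
set GF := gram ipF eF in eigvec eig_orth eig_all *.
have GHs : GH^T = GH by apply: gram_sym.
have GFs : GF^T = GF by apply: gram_sym.
have GHpd : forall a, a != 0 -> 0 < bf GH a a := @gram_pd _ _ _ ipHp _ _ indPhi.
have GFpd : forall a, a != 0 -> 0 < bf GF a a := @gram_pd _ _ _ ipFp _ _ indPsi.
have GH0 : forall a, 0 <= bf GH a a.
  by move=> a; have [->|a0] := eqVneq a 0; [rewrite /bf mulmx0 mxE | exact/ltW/GHpd].
have GF0 : forall a, 0 <= bf GF a a.
  by move=> a; have [->|a0] := eqVneq a 0; [rewrite /bf mulmx0 mxE | exact/ltW/GFpd].
have E (i : 'I_r) : B *m GH *m z i = sigma i *: w i /\ B^T *m GF *m w i = sigma i *: z i.
  have := eigvec i; rewrite mul_block_col !mul0mx add0r addr0 scale_col_mx.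
  by move/eq_col_mx.
have sig0 i : sigma i != 0 by rewrite gt_eqF.
have w0 i : w i != 0.
  apply: contra (eigvec_nz i) => /eqP w0; have [_ E2] := E i.
  move: E2; rewrite w0 mulmx0 => /esym /eqP; rewrite scaler_eq0 (negbTE (sig0 i)) /= => /eqP ->.
  by rewrite col_mx0.
have z0 i : z i != 0.
  apply: contra (eigvec_nz i) => /eqP z0; have [E1 _] := E i.
  move: E1; rewrite z0 mulmx0 => /esym /eqP; rewrite scaler_eq0 (negbTE (sig0 i)) /= => /eqP ->.
  by rewrite col_mx0.
have cross i j : sigma j * bf GF (w i) (w j) = sigma i * bf GH (z i) (z j).
  rewrite -bf_scaler -(proj1 (E j)) (bf_symT _ _ _ _ _ GHs) -bf_scaler -(proj2 (E i)).
  rewrite /bf mxE00 !trmx_mul !trmxK GHs GFs !mulmxA.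
  by [].
have orth i j : i != j -> bf GF (w i) (w j) = 0 /\ bf GH (z i) (z j) = 0.
  move=> ij; have := eig_orth _ _ ij; rewrite mxE => Hs.
  have Hc := cross i j.
  have si := sigma_pos i; have sj := sigma_pos j.
  have Hs' : bf GF (w i) (w j) + bf GH (z i) (z j) = 0 by exact: Hs.
  have Ha : (sigma i + sigma j) * bf GF (w i) (w j) = 0.
    by rewrite mulrDl Hc -mulrDr Hs' mulr0.
  move/eqP: Ha; rewrite mulf_eq0 gt_eqF ?addr_gt0 //= => /eqP Ha.
  by split => //; rewrite Ha add0r in Hs'.
pose q i := bf GF (w i) (w i).
have qH i : bf GH (z i) (z i) = q i.
  by apply: (mulfI (sig0 i)); rewrite -cross.
have qpos i : 0 < q i by apply: GFpd.
pose C := \sum_i (sigma i / q i) *: (w i *m (z i)^T).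
have CT : C^T = \sum_i (sigma i / q i) *: (z i *m (w i)^T).
  rewrite /C linear_sum; apply: eq_bigr => i _.
  by rewrite linearZ /= trmx_mul trmxK.
have Cz j : C *m GH *m z j = sigma j *: w j.
  rewrite sum_outer (bigD1 j) //= big1 ?addr0.
    by rewrite qH mulfVK // gt_eqF.
  by move=> i ij; rewrite (proj2 (orth _ _ ij)) mulr0 scale0r.
have Cw j : C^T *m GF *m w j = sigma j *: z j.
  rewrite CT sum_outer (bigD1 j) //= big1 ?addr0.
    by rewrite mulfVK // gt_eqF.
  by move=> i ij; rewrite (proj1 (orth _ _ ij)) mulr0 scale0r.
pose D := B - C.
have Dz j : D *m GH *m z j = 0.
  by rewrite /D !mulmxBl Cz (proj1 (E j)) subrr.
have Dw j : D^T *m GF *m w j = 0.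
  by rewrite /D linearB /= !mulmxBl Cw (proj2 (E j)) subrr.
have BC : B = C.
  apply/eqP; rewrite -subr_eq0 -/D; apply/negPn/negP => D0.
  pose N := D *m GH *m D^T *m GF.
  have PSDeq x0 : bf (GF *m N) x0 x0 = bf GH (D^T *m GF *m x0) (D^T *m GF *m x0).
    by rewrite /bf /N !trmx_mul !trmxK GFs !mulmxA.
  have N0 : N != 0.
    apply/negP => /eqP N0; move/negP: D0; apply; apply/eqP.
    have H1 : D^T *m GF = 0.
      apply: mx_eq0 => x0; apply/eqP; apply: contraT => Hn.
      by have := GHpd _ Hn; rewrite -PSDeq N0 /bf !(mulmx0, mul0mx) mxE ltxx.
    apply: mx_eq0 => x0; apply/eqP; apply: contraT => Hn.
    have := GFpd _ Hn; rewrite /bf trmx_mul -(mulmxA x0^T) -(mulmxA x0^T).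
    by rewrite H1 mul0mx mulmx0 mxE ltxx.
  have [s [ww [s0 [ww0 Nw]]]] := @pos_eig R n N GF GFs GFpd
    ltac:(by rewrite /N !trmx_mul !trmxK GHs GFs !mulmxA)
    ltac:(by move=> x0; rewrite PSDeq; apply: GH0) N0.
  pose t := Num.sqrt s.
  have t0 : 0 < t by rewrite sqrtr_gt0.
  have tt : t * t = s by rewrite -expr2 sqr_sqrtr // ltW.
  pose zz := t^-1 *: (D^T *m GF *m ww).
  have Dzz : D *m GH *m zz = t *: ww.
    rewrite /zz -scalemxAr !mulmxA -/N Nw scalerA -tt mulrA mulVf ?gt_eqF // mul1r.
    by [].
  have Dww : D^T *m GF *m ww = t *: zz.
    by rewrite /zz scalerA divff ?gt_eqF // scale1r.
  have ozz i : bf GH (z i) zz = 0.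
    rewrite /zz bf_scaler /bf mxE00 !trmx_mul !trmxK GHs GFs.
    have := Dz i; rewrite -mulmxA => Hz.
    by rewrite -!mulmxA Hz !mulmx0 mxE mulr0.
  have oww i : bf GF (w i) ww = 0.
    suff : s * bf GF (w i) ww = 0.
      by move/eqP; rewrite mulf_eq0 (gt_eqF s0) /= => /eqP.
    rewrite -bf_scaler -Nw /N /bf.
    have := Dw i => /(congr1 trmx); rewrite !trmx_mul !trmxK GFs trmx0 => Hd.
    by rewrite !mulmxA -(mulmxA _ GF D) Hd !mul0mx mxE.
  have Bzz : B *m GH *m zz = t *: ww.
    have -> : B *m GH *m zz = D *m GH *m zz + C *m GH *m zz.
      by rewrite /D !mulmxBl subrK.
    rewrite Dzz sum_outer big1 ?addr0 // => i _.
    by rewrite ozz mulr0 scale0r.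
  have Bww : B^T *m GF *m ww = t *: zz.
    have -> : B^T *m GF *m ww = D^T *m GF *m ww + C^T *m GF *m ww.
      by rewrite /D linearB /= !mulmxBl subrK.
    rewrite Dww CT sum_outer big1 ?addr0 // => i _.
    by rewrite oww mulr0 scale0r.
  have := eig_all t (col_mx ww zz) t0.
  rewrite mul_block_col !mul0mx add0r addr0 Bzz Bww scale_col_mx => /(_ erefl).
  case/submxP => a Ha.
  have Hw : ww = \sum_i a 0 i *: w i.
    apply/matrixP => k l; rewrite (ord1 l) summxE.
    have := congr1 (fun M : 'M[R]_(1, n + m) => M 0 (lshift m k)) Ha.
    have Sk : split (lshift m k) = inl k by rewrite -[lshift m k]/(unsplit (inl k)) unsplitK.
    rewrite !mxE Sk => ->.
    by apply: eq_bigr => i _; rewrite !mxE Sk.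
  have := GFpd _ ww0.
  rewrite {2}Hw bf_sumr big1 ?ltxx // => i _.
  by rewrite (bf_symT _ _ _ _ _ GFs) oww mulr0.
have nF i : ipnorm ipF (Psi (w i)) = Num.sqrt (q i).
  by rewrite /ipnorm /Psi (@ip_ff _ _ _ ipFp).
have nH i : ipnorm ipH (Phi (z i)) = Num.sqrt (q i).
  by rewrite /ipnorm /Phi (@ip_ff _ _ _ ipHp) qH.
have dd i : (Num.sqrt (q i))^-1 * (Num.sqrt (q i))^-1 = (q i)^-1.
  by rewrite -invfM -expr2 sqr_sqrtr // ltW.
split.
- move=> h; rewrite /S BC /C mulmx_suml.
  under eq_bigr => i _ do rewrite -scalemxAl -mulmxA mul_1x1 scalerA.
  rewrite /Psi featmat_lin; apply: eq_bigr => i _.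
  rewrite /tensor_op /u /v (@ipZl _ _ _ ipHp) /Phi (@ip_featl _ _ _ ipHp) nH nF.
  rewrite !scalerA; congr (_ *: _).
  rewrite -(dd i); ring.
- move=> i j; rewrite /u (@ipZl _ _ _ ipFp) (@ipZr _ _ _ ipFp) /Psi (@ip_ff _ _ _ ipFp) !nF.
  have [<-|ij] := eqVneq i j.
    by rewrite mulrA (dd i) mulVf // gt_eqF.
  by rewrite (proj1 (orth _ _ ij)) !mulr0.
- move=> i j; rewrite /v (@ipZl _ _ _ ipHp) (@ipZr _ _ _ ipHp) /Phi (@ip_ff _ _ _ ipHp) !nH.
  have [<-|ij] := eqVneq i j.
    by rewrite qH mulrA (dd i) mulVf // gt_eqF.
  by rewrite (proj2 (orth _ _ ij)) !mulr0.
Qed.
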